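(* Let $R$ be a tournament on $[n]=\{1,\dots,n\}$. Then there is a positive integer $M$ such that for every integer $N\ge M$ there exist independent, proper $N$-sided dice $D_1,\dots,D_n$ such that for all $i,j\in[n]$, $$P(D_i>D_j)>\tfrac12 \iff (i,j)\in R .$$
   Context: A tournament on a set $I$ is a subset $R\subset I\times I$ such that for every pair of distinct $i,j\in I$ exactly one of $(i,j),(j,i)$ lies in $R$, and $R$ contains no pair $(i,i)$. An $N$-sided die is a random variable on a sample space of $N$ equally likely outcomes (faces) taking positive integer values; it is proper if all its values lie in $\{1,\dots,N\}$ and the sum of the values over the $N$ faces is $N(N+1)/2$ (equivalently its expected value is $(N+1)/2$). Independent dice means the corresponding random variables are independent. *)

(* Defs.v *)
From mathcomp Require Import all_boot all_order.
Set Implicit Arguments.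
Unset Strict Implicit.
Unset Printing Implicit Defensive.

Definition is_tournament (I : finType) (R : rel I) : Prop :=
  (forall i, ~~ R i i) /\
  (forall i j, i != j -> (R i j (+) R j i)).

Definition die (N : nat) := {ffun 'I_N -> nat}.

Definition proper_die (N : nat) (D : die N) : Prop :=
  (forall f, 1 <= D f <= N) /\ (\sum_(f < N) D f = N * N.+1 %/ 2).

(* Number of outcomes (a, b) of the product sample space 'I_N * 'I_N (two
   independent rolls, N^2 equally likely outcomes) with D a > E b.
   For independent dice, P(D > E) = wins D E / N^2. *)
Definition wins (N : nat) (D E : die N) : nat :=
  #|[set ab : 'I_N * 'I_N | E ab.2 < D ab.1]|.

Definition beats (N : nat) (D E : die N) : bool :=
  N ^ 2 < 2 * wins D E.

(* Main.v *)
Require Import Defs.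
From mathcomp Require Import all_boot all_order zify.
Set Implicit Arguments.
Unset Strict Implicit.
Unset Printing Implicit Defensive.


Lemma blocksum (h : nat -> nat) G m :
  \sum_(0 <= a < m * G) h a = \sum_(0 <= c < m) \sum_(0 <= s < G) h (c * G + s).
Proof.
rewrite big_nat_mul; apply: eq_bigr => c _.
rewrite -{1}(add0n (c * G)) big_addn mulSn addnK.
by apply: eq_bigr => s _; rewrite addnC.
Qed.

Lemma modsum (h : nat -> nat) q K :
  \sum_(0 <= c < q * K) h (c %% K) = q * \sum_(0 <= t < K) h t.
Proof.
rewrite blocksum.
transitivity (\sum_(0 <= c < q) \sum_(0 <= t < K) h t).
  apply: eq_bigr => c _; rewrite big_nat_cond [RHS]big_nat_cond.
  apply: eq_bigr => t /andP[/andP[_ ht] _].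
  by rewrite modnMDl modn_small.
by rewrite sum_nat_const_nat subn0.
Qed.

Lemma sum_const_range m k x : \sum_(m <= i < k) x = (k - m) * x.
Proof. exact: sum_nat_const_nat. Qed.

Lemma twice_sum_id m : 2 * \sum_(0 <= i < m) i = m * m.-1.
Proof.
elim: m => [|m IH]; first by rewrite big_geq.
rewrite big_nat_recr //= mulnDr IH; case: m {IH} => [|m] //=; lia.
Qed.

Lemma single_sum (x : nat -> nat) u n : u < n ->
  \sum_(0 <= i < n) (if i == u then x i else 0) = x u.
Proof.
move=> hu; rewrite (@big_cat_nat _ _ _ u) //= ?(ltnW hu) //.
rewrite big_nat_cond big1; last by move=> i /andP[/andP[_ h] _]; rewrite ltn_eqF.
rewrite big_ltn // eqxx big_nat_cond big1 ?addn0 //.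
by move=> i /andP[/andP[h _] _]; rewrite gtn_eqF.
Qed.


Definition dv (G K P : nat) (E : nat -> nat) (f : nat) : nat :=
  if f < P then G * (f %/ G) + 1 + E ((f %/ G) %% K) else f.+1.

Section Count.
Variables (G K q N : nat) (E F : nat -> nat).
Hypothesis G0 : 0 < G.
Hypothesis EG : forall t, E t < G.
Hypothesis FG : forall t, F t < G.
Let P := q * K * G.
Hypothesis PN : P <= N.

Lemma dv_block (H : nat -> nat) c s : c < q * K -> s < G ->
  dv G K P H (c * G + s) = G * c + 1 + H (c %% K).
Proof.
move=> hc hs; rewrite /dv divnMDl // divn_small // addn0.
have -> : c * G + s < P by rewrite /P; nia.
by rewrite mulnC.
Qed.

Lemma dv_le_P (H : nat -> nat) (HG : forall t, H t < G) f : f < P -> dv G K P H f <= P.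
Proof.
move=> hf; rewrite /dv hf.
have h1 : f %/ G < q * K by rewrite ltn_divLR.
have := HG ((f %/ G) %% K); rewrite /P; nia.
Qed.

Lemma inner_count a : a < N ->
  \sum_(0 <= b < N) (dv G K P F b < dv G K P E a) =
  if a < P then G * (a %/ G) + G * (F ((a %/ G) %% K) < E ((a %/ G) %% K)) else a.
Proof.
move=> aN.
rewrite (@big_cat_nat _ _ _ P) //=.
case: ifP => aP.
- set c := a %/ G.
  have hc : c < q * K by rewrite ltn_divLR.
  have hva : dv G K P E a = G * c + 1 + E (c %% K) by rewrite /dv aP.
  have -> : \sum_(P <= b < N) (dv G K P F b < dv G K P E a) = 0.
    rewrite big_nat_cond big1 //.
    move=> b /andP[/andP[hb _] _]; rewrite hva /dv (ltnNge b P) hb /=.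
    have := EG (c %% K); rewrite /P in hb * => h.
    suff: ~~ (b.+1 < G * c + 1 + E (c %% K)) by move/negbTE->.
    rewrite -leqNgt; nia.
  rewrite addn0.
  rewrite /P blocksum.
  transitivity (\sum_(0 <= c' < q * K) G * (G * c' + 1 + F (c' %% K) < G * c + 1 + E (c %% K))).
    rewrite big_nat_cond [RHS]big_nat_cond.
    apply: eq_bigr => c' /andP[/andP[_ hc'] _]; rewrite big_nat_cond.
    rewrite (eq_bigr (fun _ => (G * c' + 1 + F (c' %% K) < G * c + 1 + E (c %% K)) : nat)).
      by rewrite -big_nat_cond sum_nat_const_nat subn0 mulnC.
    move=> s /andP[/andP[_ hs] _]; rewrite hva dv_block //.
  rewrite -big_distrr /= -mulnDr; congr (G * _).
  rewrite (@big_cat_nat _ _ _ c) //= ?(ltnW hc) //.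
  have -> : \sum_(0 <= c' < c) (G * c' + 1 + F (c' %% K) < G * c + 1 + E (c %% K)) = c.
    rewrite big_nat_cond (eq_bigr (fun _ => 1)).
      by rewrite -big_nat_cond sum_nat_const_nat subn0 muln1.
    move=> c' /andP[/andP[_ h] _]; have := FG (c' %% K).
    move=> hF; have -> // : G * c' + 1 + F (c' %% K) < G * c + 1 + E (c %% K); nia.
  rewrite big_ltn //.
  have -> : \sum_(c.+1 <= c' < q * K) (G * c' + 1 + F (c' %% K) < G * c + 1 + E (c %% K)) = 0.
    rewrite big_nat_cond big1 // => c' /andP[/andP[h _] _]; have := EG (c %% K) => hE.
    suff: ~~ (G * c' + 1 + F (c' %% K) < G * c + 1 + E (c %% K)) by move/negbTE->.
    rewrite -leqNgt; nia.
  by rewrite ltn_add2l addn0.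
- have hva : dv G K P E a = a.+1 by rewrite /dv aP.
  have aP' : P <= a by rewrite leqNgt aP.
  rewrite hva big_nat_cond (eq_bigr (fun _ => 1)); last first.
    move=> b /andP[/andP[_ hb] _]; have := dv_le_P FG hb => h.
    by have -> : dv G K P F b < a.+1 by rewrite ltnS (leq_trans h).
  rewrite -big_nat_cond sum_nat_const_nat subn0 muln1.
  rewrite (@big_cat_nat _ _ _ a) //= ?(ltnW aN) //.
  rewrite big_nat_cond (eq_bigr (fun _ => 1)); last first.
    move=> b /andP[/andP[hb hb'] _].
    by rewrite /dv (ltnNge b P) hb /= ltnS hb'.
  rewrite -big_nat_cond sum_nat_const_nat muln1.
  rewrite big_nat_cond big1 ?addn0; first by rewrite subnKC.
  move=> b /andP[/andP[hb hb'] _].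
  have hPb : ~~ (b < P) by rewrite -leqNgt (leq_trans aP').
  rewrite /dv (negbTE hPb).
  suff: ~~ (b.+1 < a.+1) by move/negbTE->.
  by rewrite ltnS -leqNgt.
Qed.

Definition Wc := \sum_(0 <= t < K) (F t < E t).

Lemma wins_sum :
  \sum_(0 <= a < N) \sum_(0 <= b < N) (dv G K P F b < dv G K P E a) =
  G * G * (\sum_(0 <= c < q * K) c) + G * G * (q * Wc) + \sum_(P <= a < N) a.
Proof.
rewrite big_nat_cond (eq_bigr (fun a => if a < P then G * (a %/ G) + G * (F ((a %/ G) %% K) < E ((a %/ G) %% K)) else a)); last first.
  by move=> a /andP[/andP[_ ha] _]; rewrite inner_count.
rewrite -big_nat_cond (@big_cat_nat _ _ _ P) //=; congr (_ + _).
- rewrite big_nat_cond (eq_bigr (fun a => G * (a %/ G) + G * (F ((a %/ G) %% K) < E ((a %/ G) %% K)))); last first.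
    by move=> a /andP[/andP[_ ha] _]; rewrite ha.
  rewrite -big_nat_cond /P blocksum.
  rewrite (eq_bigr (fun c => G * (G * c) + G * (G * (F (c %% K) < E (c %% K))))); last first.
    move=> c _; rewrite big_nat_cond.
    rewrite (eq_bigr (fun _ => G * c + G * (F (c %% K) < E (c %% K)))); last first.
      by move=> s /andP[/andP[_ hs] _]; rewrite divnMDl // divn_small // addn0.
    by rewrite -big_nat_cond sum_nat_const_nat subn0 mulnDr.
  rewrite big_split /= -!big_distrr /= (modsum (fun t => (F t < E t) : nat)) /Wc.
  by rewrite !mulnA.
- rewrite big_nat_cond [RHS]big_nat_cond; apply: eq_bigr => a /andP[/andP[ha _] _].
  by rewrite ltnNge ha.
Qed.

Lemma crit (w : nat) : 0 < q -> K <= G -> N < P + K * G ->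
  w = G * G * (\sum_(0 <= c < q * K) c) + G * G * (q * Wc) + \sum_(P <= a < N) a ->
  (N * N < 2 * w) = (K < 2 * Wc).
Proof.
move=> q0 KG NP ->.
have hC := twice_sum_id (q * K).
have hN := twice_sum_id N.
have hP := twice_sum_id P.
rewrite (@big_cat_nat _ _ _ P) //= in hN.
set C := \sum_(0 <= c < q * K) c in hC *.
set S0 := \sum_(0 <= c < P) c in hN hP *.
set S1 := \sum_(P <= c < N) c in hN *.
have K0 : 0 < K by move: NP; rewrite /P; case: (K) => //; rewrite !muln0.
set Y := q * G * G.
set r := N - P.
have hNr : N = P + r by rewrite subnKC.
have rY : r < Y.
  have : r < K * G by rewrite /r; lia.
  move=> h; apply: (leq_trans h); rewrite /Y; clear -KG q0; nia.
have key : 2 * (G * G * C + G * G * (q * Wc) + S1) + K * Y + r = N * N + 2 * Wc * Y.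
  rewrite /Y /P in hP hNr *. clear -hC hN hP hNr q0 K0 G0. nia.
apply/idP/idP => h.
- rewrite ltnNge; apply/negP => h2.
  have : 2 * Wc * Y <= K * Y by rewrite leq_mul2r h2 orbT.
  lia.
- have : (K.+1) * Y <= 2 * Wc * Y by rewrite leq_mul2r h orbT.
  rewrite mulSn. lia.
Qed.

Lemma dv_bounds f : f < N -> 0 < dv G K P E f <= N.
Proof.
move=> fN; rewrite /dv; case: ifP => fP; last by rewrite ltn0Sn.
rewrite addn1 addSn ltn0Sn /=.
have h1 : f %/ G < q * K by rewrite ltn_divLR.
have := EG ((f %/ G) %% K); have := PN; rewrite /P in fP *; nia.
Qed.

Lemma dv_sum T : G = T.*2.+1 -> \sum_(0 <= t < K) E t = K * T ->
  \sum_(0 <= f < N) dv G K P E f = \sum_(0 <= f < N) f.+1.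
Proof.
move=> hG hE.
rewrite (@big_cat_nat _ _ _ P) //= [RHS](@big_cat_nat _ _ _ P) //=; congr (_ + _); last first.
  rewrite big_nat_cond [RHS]big_nat_cond; apply: eq_bigr => a /andP[/andP[ha _] _].
  by rewrite /dv ltnNge ha.
rewrite /P [LHS]blocksum [RHS]blocksum.
have hs : \sum_(0 <= s < G) s = G * T.
  have h := twice_sum_id G; have h2 : G.-1 = 2 * T by rewrite hG mul2n.
  rewrite h2 in h; nia.
rewrite big_nat_cond (eq_bigr (fun c => G * (G * c + 1) + G * E (c %% K))); last first.
  move=> c /andP[/andP[_ hc] _]; rewrite big_nat_cond.
  rewrite (eq_bigr (fun _ => G * c + 1 + E (c %% K))); last first.
    by move=> s /andP[/andP[_ hs'] _]; rewrite dv_block.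
  by rewrite -big_nat_cond sum_nat_const_nat subn0 mulnDr.
rewrite [RHS](eq_bigr (fun c => G * (G * c + 1) + G * T)); last first.
  move=> c _; rewrite -hs big_nat_cond.
  rewrite (eq_bigr (fun s => (c * G + 1) + s)); last by move=> s _; lia.
  rewrite -big_nat_cond big_split /= sum_nat_const_nat subn0 (mulnC c) mulnDr; lia.
rewrite -big_nat_cond !big_split /=; congr (_ + _).
rewrite -!big_distrr /= (modsum E) hE sum_nat_const_nat subn0; lia.
Qed.

End Count.


Section Gadget.
Variables (n : nat) (Rn : nat -> nat -> bool).
Hypothesis n0 : 0 < n.
Hypothesis Rasym : forall a b, a < n -> b < n -> a != b -> Rn a b -> ~~ Rn b a.

Definition e0 (u i j s : nat) : nat :=
  if i == j then (if s == 0 then (if u == i then 0 else u) else (if u == i then 0 else n.+1 - u))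
  else if Rn i j then
    (if s == 0 then (if u == i then n.+1 else if u == j then n else u)
     else (if u == i then 1 else if u == j then 0 else n.+1 - u))
  else (if s == 0 then u else n.+1 - u).

Definition Kg := n * n * 2.
Definition Tg := Kg * (n + 2).
Definition rest u := \sum_(0 <= i < n) \sum_(0 <= j < n) \sum_(0 <= s < 2) e0 u i j s.
Definition top u := Tg - rest u.
Definition eg u i j s := e0 u i j s + (if (i == u) && (j == u) && (s == 0) then top u else 0).
Definition Bs := Tg - (n + 2).
Definition Ef u t := Bs + eg u (t %/ 2 %/ n) (t %/ 2 %% n) (t %% 2).

Lemma decode_sum (h : nat -> nat -> nat -> nat) :
  \sum_(0 <= t < Kg) h (t %/ 2 %/ n) (t %/ 2 %% n) (t %% 2) =
  \sum_(0 <= i < n) \sum_(0 <= j < n) \sum_(0 <= s < 2) h i j s.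
Proof.
rewrite /Kg blocksum.
transitivity (\sum_(0 <= p < n * n) \sum_(0 <= s < 2) h (p %/ n) (p %% n) s).
  apply: eq_bigr => p _; rewrite big_nat_cond [RHS]big_nat_cond.
  apply: eq_bigr => s /andP[/andP[_ hs] _].
  have -> : (p * 2 + s) %/ 2 = p by rewrite divnMDl // (divn_small hs) addn0.
  by rewrite modnMDl (modn_small hs).
rewrite blocksum; apply: eq_bigr => i _; rewrite big_nat_cond [RHS]big_nat_cond.
apply: eq_bigr => j /andP[/andP[_ hj] _].
by rewrite divnMDl ?(divn_small hj) ?addn0 ?modnMDl ?(modn_small hj).
Qed.

Lemma e0_le u i j s : u < n -> e0 u i j s <= n.+1.
Proof. move=> hu; rewrite /e0; repeat case: ifP => _; lia. Qed.

Lemma rest_le u : u < n -> rest u <= Kg * n.+1.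
Proof.
move=> hu; rewrite /rest.
apply: leq_trans (_ : \sum_(0 <= i < n) \sum_(0 <= j < n) \sum_(0 <= s < 2) n.+1 <= _).
  apply: leq_sum => i _; apply: leq_sum => j _; apply: leq_sum => s _; exact: e0_le.
rewrite !sum_nat_const_nat !subn0 /Kg; lia.
Qed.

Lemma top_ge u : u < n -> Kg <= top u.
Proof. move=> hu; have := rest_le hu; rewrite /top /Tg; lia. Qed.

Lemma Ef_lt u t : u < n -> Ef u t < Tg.*2.+1.
Proof.
move=> hu; rewrite /Ef /eg /Bs.
have := e0_le (t %/ 2 %/ n) (t %/ 2 %% n) (t %% 2) hu.
have h1 : top u <= Tg by rewrite /top leq_subr.
have h2 : n + 2 <= Tg by rewrite /Tg /Kg; nia.
case: ifP => _; lia.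
Qed.

Lemma sum2 (f : nat -> nat) : \sum_(0 <= s < 2) f s = f 0 + f 1.
Proof. by rewrite big_ltn // big_ltn // big_geq // addn0. Qed.

Lemma Ef_sum u : u < n -> \sum_(0 <= t < Kg) Ef u t = Kg * Tg.
Proof.
move=> hu; rewrite big_split /= sum_nat_const_nat subn0.
rewrite (decode_sum (eg u)) /eg.
rewrite (eq_bigr (fun i => \sum_(0 <= j < n) \sum_(0 <= s < 2) e0 u i j s +
                     (if i == u then top u else 0))); last first.
  move=> i _.
  rewrite (eq_bigr (fun j => \sum_(0 <= s < 2) e0 u i j s +
                     (if (i == u) && (j == u) then top u else 0))); last first.
    by move=> j _; rewrite !sum2 /=; case: ((i == u) && (j == u)) => /=; lia.
  rewrite big_split /=; congr (_ + _).
  case: (boolP (i == u)) => hi /=; first by rewrite (single_sum (fun _ => top u)).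
  by rewrite big1.
rewrite big_split /= (single_sum (fun _ => top u)) // -/(rest u) /top /Bs.
have := rest_le hu; rewrite /Tg /Kg; nia.
Qed.


Lemma pair_lb a b i j : a < n -> b < n -> a != b -> Rn a b -> i < n -> j < n ->
  (if (i == a) && (j == b) then 2 else 1) <=
  (eg b i j 0 < eg a i j 0) + (eg b i j 1 < eg a i j 1).
Proof.
move=> ha hb hab hR hi hj.
have ta := top_ge ha; have tb := top_ge hb.
have Kn : n <= Kg by rewrite /Kg; nia.
have nR := Rasym ha hb hab hR.
case: (boolP ((i == a) && (j == b))) => [/andP[/eqP ei /eqP ej]|hne].
  subst i j; rewrite /eg /e0 (negbTE hab) hR /=.
  rewrite !eqxx (eq_sym b a) (negbTE hab) /=; lia.
case: (boolP ((i == b) && (j == a))) => [/andP[/eqP ei /eqP ej]|hne2].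
  subst i j; rewrite /eg /e0 eq_sym (negbTE hab) (negbTE nR) /=.
  rewrite ?eqxx ?(eq_sym b a) ?(negbTE hab) /=; lia.
move: hne hne2; rewrite /eg /e0 /=.
case: (Rn i j); repeat case: ifP; lia.
Qed.

Lemma W_big a b : a < n -> b < n -> a != b -> Rn a b ->
  Kg < 2 * \sum_(0 <= t < Kg) (Ef b t < Ef a t).
Proof.
move=> ha hb hab hR.
rewrite (eq_bigr (fun t => (eg b (t %/ 2 %/ n) (t %/ 2 %% n) (t %% 2) <
                            eg a (t %/ 2 %/ n) (t %/ 2 %% n) (t %% 2)) : nat)); last first.
  by move=> t _; rewrite /Ef ltn_add2l.
rewrite (decode_sum (fun i j s => (eg b i j s < eg a i j s) : nat)).
have : \sum_(0 <= i < n) \sum_(0 <= j < n) (if (i == a) && (j == b) then 2 else 1)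
       <= \sum_(0 <= i < n) \sum_(0 <= j < n) \sum_(0 <= s < 2) (eg b i j s < eg a i j s).
  rewrite big_nat_cond [X in _ <= X]big_nat_cond; apply: leq_sum => i /andP[/andP[_ hi] _].
  rewrite big_nat_cond [X in _ <= X]big_nat_cond; apply: leq_sum => j /andP[/andP[_ hj] _].
  by rewrite sum2; apply: pair_lb.
rewrite (eq_bigr (fun i => n + (if i == a then 1 else 0))); last first.
  move=> i _.
  rewrite (eq_bigr (fun j => 1 + (if i == a then (if j == b then 1 else 0) else 0))); last first.
    by move=> j _; case: (i == a); case: (j == b).
  rewrite big_split /= sum_nat_const_nat subn0 muln1; congr (_ + _).
  case: (i == a); first by rewrite (single_sum (fun _ => 1)).
  by rewrite big1.
rewrite big_split /= sum_nat_const_nat subn0 (single_sum (fun _ => 1)) // /Kg.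
lia.
Qed.

End Gadget.


Lemma wins_eq N (f g : nat -> nat) :
  wins ([ffun x : 'I_N => f x] : die N) ([ffun x : 'I_N => g x] : die N) =
  \sum_(0 <= a < N) \sum_(0 <= b < N) (g b < f a).
Proof.
rewrite /wins -sum1_card big_mkcond /=.
rewrite big_mkord (eq_bigr (fun a : 'I_N => \sum_(b < N) (g b < f a))); last first.
  by move=> a _; rewrite big_mkord.
rewrite pair_big /=; apply: eq_bigr => [[a b]] _ /=.
by rewrite inE !ffunE; case: (_ < _).
Qed.

Lemma sum_succ N : \sum_(0 <= f < N) f.+1 = N * N.+1 %/ 2.
Proof.
have h := twice_sum_id N.+1.
rewrite big_nat_recl // add0n /= in h.
by rewrite mulnC -h mulKn.
Qed.

Theorem theorem1p1 (n : nat) (R : rel 'I_n) :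
  is_tournament R ->
  exists M : nat, 0 < M /\
    forall N : nat, M <= N ->
      exists D : 'I_n -> die N,
        (forall i, proper_die (D i)) /\
        (forall i j : 'I_n, beats (D i) (D j) <-> R i j).
Proof.
case: n R => [|m] R [Rirr Rxor].
  exists 1; split => // N _; exists (fun _ => [ffun _ => 1]).
  by split; case.
set n := m.+1.
have n0 : 0 < n by [].
pose Rn (a b : nat) := R (inord a) (inord b).
have Rasym : forall a b, a < n -> b < n -> a != b -> Rn a b -> ~~ Rn b a.
  move=> a b ha hb hab; rewrite /Rn.
  have hne : (inord a : 'I_n) != inord b.
    apply: contra hab => /eqP h; have := congr1 (@nat_of_ord _) h.
    by rewrite !inordK // => ->.
  by have := Rxor _ _ hne; case: (R _ _); case: (R _ _).
pose K := Kg n.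
pose T := Tg n.
pose G := T.*2.+1.
have G0 : 0 < G by [].
have KG : K <= G by rewrite /G /T /Tg -/K; nia.
have K0 : 0 < K by rewrite /K /Kg; nia.
exists (K * G); split; first by rewrite muln_gt0 K0.
move=> N hN.
pose q := N %/ (K * G).
have q0 : 0 < q by rewrite /q divn_gt0 // muln_gt0 K0.
have PN : q * K * G <= N by rewrite -mulnA /q leq_divM.
have NP : N < q * K * G + K * G.
  rewrite -mulnA /q {1}(divn_eq N (K * G)) ltn_add2l ltn_pmod // muln_gt0 K0.
pose E (u : nat) := Ef n Rn u.
have EG : forall u t, u < n -> E u t < G by move=> u t hu; exact: Ef_lt.
exists (fun i => [ffun f : 'I_N => dv G K (q * K * G) (E i) f]).
split.
- move=> i; split.
    by move=> f; rewrite ffunE; apply: (dv_bounds G0 (fun t => EG i t (ltn_ord i)) PN (ltn_ord f)).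
  rewrite (eq_bigr (fun f : 'I_N => dv G K (q * K * G) (E i) f)); last by move=> f _; rewrite ffunE.
  rewrite -(big_mkord xpredT (fun f => dv G K (q * K * G) (E i) f)).
  rewrite (@dv_sum G K q N (E i) G0 PN T) //; first exact: sum_succ.
  exact: Ef_sum.
- move=> i j.
  rewrite /beats wins_eq.
  rewrite (wins_sum G0 (fun t => EG i t (ltn_ord i)) (fun t => EG j t (ltn_ord j)) PN).
  rewrite -mulnn (crit G0 PN q0 KG NP erefl) /Wc.
  have hRn : forall a b : 'I_n, Rn a b = R a b by move=> a b; rewrite /Rn !inord_val.
  split => [h|h].
  + apply/negPn/negP => nR.
    have [eij|nij] := eqVneq i j.
      subst j; move: h; rewrite (eq_bigr (fun _ => 0)); last by move=> t _; rewrite ltnn.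
      by rewrite big1 // ltn0.
    have hRji : R j i by have := Rxor _ _ nij; rewrite (negbTE nR).
    have nji : j != i by rewrite eq_sym.
    have h2 := W_big n0 Rasym (ltn_ord j) (ltn_ord i) nji.
    rewrite hRn in h2; have {h2} h2 := h2 hRji.
    have hs : \sum_(0 <= t < K) (E j t < E i t) + \sum_(0 <= t < K) (E i t < E j t) <= K.
      rewrite -big_split /=.
      apply: leq_trans (_ : \sum_(0 <= t < K) 1 <= _).
        by apply: leq_sum => t _; case: ltngtP.
      by rewrite sum_nat_const_nat subn0 muln1.
    move: h h2 hs; rewrite /K /E /=; lia.
  + have nij : i != j by apply: contraTneq h => ->; rewrite (negbTE (Rirr j)).
    have := W_big n0 Rasym (ltn_ord i) (ltn_ord j) nij.
    by rewrite hRn => /(_ h).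
Qed.
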